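(* Let $X=(V,E,T)$ be a $2$-dimensional $(k_0,k_1)$-regular $(\epsilon,\mu)$-cosystolic expander, let $\frac12<\eta<1$, and let $F\subseteq E$. Suppose $\widetilde\lambda_2(G_0(X))<\frac12$ and $|V|$ is sufficiently large, i.e. $|V|\ge N$ for a threshold $N$ depending only on $\mu$ and $\widetilde\lambda_2(G_0(X))$. Then: (1) for every vertex $v\in V$ with $\frac{k_0}{2}<|F_v|\le\eta k_0$ (a semi-fat vertex), $|\delta(F_v)|\ge\epsilon k_1(1-\eta)k_0$; (2) for every vertex $v\in V$ with $|F_v|\le\frac{k_0}{2}$ (a non-fat vertex), $|\delta(F_v)|\ge\epsilon k_1|F_v|$.
   Context: A $2$-dimensional simplicial complex $X=(V,E,T)$ consists of a finite vertex set $V$, a set $E$ of $2$-element subsets of $V$ and a set $T$ of $3$-element subsets of $V$ such that every $2$-element subset of a triangle lies in $E$. $X$ is $(k_0,k_1)$-regular if every vertex lies in exactly $k_0$ edges and every edge lies in exactly $k_1$ triangles. $G_0(X)=(V,E)$ is the underlying graph and $\widetilde\lambda_2(G_0(X))$ its second largest adjacency eigenvalue divided by $k_0$. For $S\subseteq V$, $\delta(S)$ is the set of edges with exactly one endpoint in $S$; for $F\subseteq E$, $\delta(F)$ is the set of triangles containing an odd number of edges of $F$. $B^0(X)=\{\emptyset,V\}$, $Z^0(X)=\{S\subseteq V:\delta(S)=\emptyset\}$, $B^1(X)=\{\delta(S):S\subseteq V\}$, $Z^1(X)=\{F\subseteq E:\delta(F)=\emptyset\}$. $\mathrm{dist}(A,B)=|A\setminus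 B|+|B\setminus A|$; distance to a family is the minimum over its members. With $X(0)=V$, $X(1)=E$, $X$ is an $(\epsilon,\mu)$-cosystolic expander ($\epsilon,\mu>0$) if for $i\in\{0,1\}$ and all $S\subseteq X(i)$: if $|\delta(S)|=0$ then $S\in B^i(X)$ or $|S|\ge\mu|X(i)|$; otherwise $|\delta(S)|/\mathrm{dist}(S,Z^i(X))\ge\epsilon k_i$. The local view of $v$ with respect to $F$ is $F_v=\{e\in F: v\in e\}$. *)

(* Defs.v *)
From HB Require Import structures.
From mathcomp Require Import all_boot all_order all_algebra.
From mathcomp Require Import reals.
Set Implicit Arguments. Unset Strict Implicit. Unset Printing Implicit Defensive.
Import Order.TTheory GRing.Theory Num.Theory.
Local Open Scope ring_scope.

Section Complex.
Variable V : finType.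
Variables E T : {set {set V}}.

Definition is_2complex : Prop :=
  (forall e : {set V}, e \in E -> #|e| = 2%N) /\
  (forall t : {set V}, t \in T -> #|t| = 3%N) /\
  (forall t e : {set V}, t \in T -> e \subset t -> #|e| = 2%N -> e \in E).

Definition regular (k0 k1 : nat) : Prop :=
  (forall v : V, #|[set e in E | v \in e]| = k0) /\
  (forall e : {set V}, e \in E -> #|[set t in T | e \subset t]| = k1).

Definition delta0 (S : {set V}) : {set {set V}} :=
  [set e in E | #|e :&: S| == 1%N].

Definition delta1 (F : {set {set V}}) : {set {set V}} :=
  [set t in T | odd #|[set e in F | e \subset t]|].

Definition B0 (S : {set V}) : bool := (S == set0) || (S == setT).
Definition Z0 (S : {set V}) : bool := delta0 S == set0.
Definition B1 (F : {set {set V}}) : Prop := exists S : {set V}, F = delta0 S.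
Definition Z1 (F : {set {set V}}) : bool := (F \subset E) && (delta1 F == set0).

Definition local_view (F : {set {set V}}) (v : V) : {set {set V}} :=
  [set e in F | v \in e].

(* adjacency matrix of the underlying graph G_0(X), rows/columns indexed
   by 'I_#|V| via the canonical enumeration of V *)
Definition adjmx (R : nzRingType) : 'M[R]_#|V| :=
  \matrix_(i, j) (([set (enum_val i : V); (enum_val j : V)] \in E)%:R).

End Complex.

Definition distS (X : finType) (A B : {set X}) : nat := #|A :\: B| + #|B :\: A|.

(* distance from A to a (nonempty) family P: minimum over its members;
   #|X| is an upper bound for every distance, used as neutral element *)
Definition dist_fam (X : finType) (A : {set X}) (P : pred {set X}) : nat :=
  \big[minn/#|X|]_(Z : {set X} | P Z) distS A Z.

Definition cosystolic (R : realFieldType) (V : finType) (E T : {set {set V}})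
  (k0 k1 : nat) (eps mu : R) : Prop :=
  0 < eps /\ 0 < mu /\
  (forall S : {set V},
     if delta0 E S == set0 then B0 S \/ mu * #|V|%:R <= #|S|%:R
     else eps * k0%:R <= #|delta0 E S|%:R / (dist_fam S (Z0 E))%:R) /\
  (forall F : {set {set V}}, F \subset E ->
     if delta1 T F == set0 then B1 E F \/ mu * #|E|%:R <= #|F|%:R
     else eps * k1%:R <= #|delta1 T F|%:R / (dist_fam F (Z1 E T))%:R).

Definition spectrum (R : realType) (n : nat) (A : 'M[R]_n) (s : seq R) : Prop :=
  sorted (fun x y => y <= x) s /\ char_poly A = \prod_(x <- s) ('X - x%:P).

Definition lambda2_tilde (R : realType) (k0 : nat) (s : seq R) : R :=
  s`_1 / k0%:R.

(* Main.v *)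
Require Import Defs.
From HB Require Import structures.
From mathcomp Require Import all_boot all_order all_algebra.
From mathcomp Require Import reals.
From mathcomp Require Import complex ring lra zify.
Import Order.TTheory GRing.Theory Num.Theory.
Set Implicit Arguments. Unset Strict Implicit. Unset Printing Implicit Defensive.
Local Open Scope ring_scope.

Lemma char_poly_conj (F : fieldType) n (P M : 'M[F]_n) : P \in unitmx ->
  char_poly (invmx P *m M *m P) = char_poly M.
Proof.
move=> Pu; rewrite /char_poly /char_poly_mx.
have -> : 'X%:M - map_mx polyC (invmx P *m M *m P) =
  map_mx polyC (invmx P) *m ('X%:M - map_mx polyC M) *m map_mx polyC P.
  rewrite mulmxBr mulmxBl !map_mxM; congr (_ - _).
  rewrite mul_mx_scalar -scalemxAl -map_mxM mulVmx // map_mx1.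
  by rewrite scalemx1.
rewrite !det_mulmx mulrC mulrA -det_mulmx -map_mxM mulmxV // map_mx1 det1.
by rewrite mul1r.
Qed.

Lemma count_gt_s1 (R : realDomainType) (s : seq R) :
  sorted (fun a b => b <= a) s -> (count (fun r => (s`_1 < r)%R) s <= 1)%N.
Proof.
case: s => [|a [|b t]] //=; first by rewrite addn0 leq_b1.
move=> /andP[_ Hp].
have /allP Hall : all (fun r => r <= b) t.
  by apply: (order_path_min (leT := fun a b => b <= a)) => // x y z /= h1 h2; exact: le_trans h2 h1.
rewrite ltxx add0n.
have -> : count (fun r => b < r) t = 0%N.
  apply/eqP; rewrite -leqn0 leqNgt -has_count; apply/hasP => -[r /Hall rb br].
  by move: (lt_le_trans br rb); rewrite ltxx.
by rewrite addn0; case: (b < a).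
Qed.
Lemma count_enumT (T : finType) (p : pred T) : count p (index_enum T) = #|p|.
Proof. by rewrite -sum1_count sum1_card. Qed.
Lemma count2 (T : finType) (p : pred T) i j : p i -> p j -> i != j -> (2 <= #|p|)%N.
Proof.
move=> pi pj ij; have := cards2 i j; rewrite ij => <-; apply: subset_leq_card.
by apply/subsetP => z; rewrite !inE => /orP[] /eqP ->.
Qed.


Lemma cardI2 (V : finType) (x y : V) (S : {set V}) : x != y ->
  #|[set x; y] :&: S| = ((x \in S) + (y \in S))%N.
Proof.
move=> xy.
have e : forall z, (z \in [set x; y] :&: S) = ((z == x) && (x \in S)) || ((z == y) && (y \in S)).
  move=> z; rewrite !inE; case: (eqVneq z x) => [->|zx] /=; first by rewrite (negbTE xy) orbF.
  by case: (eqVneq z y) => [->|zy] /=.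
case hx: (x \in S); case hy: (y \in S).
- have -> : [set x; y] :&: S = [set x; y] by apply/setP => z; rewrite e hx hy !andbT !inE.
  by rewrite cards2 xy.
- have -> : [set x; y] :&: S = [set x] by apply/setP => z; rewrite e hx hy !andbT andbF orbF !inE.
  by rewrite cards1.
- have -> : [set x; y] :&: S = [set y] by apply/setP => z; rewrite e hx hy !andbT andbF !inE.
  by rewrite cards1.
- have -> : [set x; y] :&: S = set0 by apply/setP => z; rewrite e hx hy !andbF !inE.
  by rewrite cards0.
Qed.

Lemma cardI1 (V : finType) (x : V) (A : {set V}) : #|A :&: [set x]| = (x \in A).
Proof.
case hx: (x \in A).
  have -> : A :&: [set x] = [set x].
    by apply/setP => z; rewrite !inE; case: (eqVneq z x) => [->|_] /=; rewrite ?eqxx ?hx ?andbF ?andbT.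
  by rewrite cards1.
have -> : A :&: [set x] = set0.
  by apply/setP => z; rewrite !inE; case: (eqVneq z x) => [->|_] /=; rewrite ?eqxx ?hx ?andbF ?andbT.
by rewrite cards0.
Qed.


Lemma set2_neq (V : finType) (E : {set {set V}}) (u w : V) :
  (forall e, e \in E -> #|e| = 2) -> [set u; w] \in E -> u != w.
Proof.
move=> hE2 h; apply/eqP => uw; move: (hE2 _ h); rewrite uw setUid cards1.
by [].
Qed.

Lemma set2_of (V : finType) (e : {set V}) (u : V) :
  #|e| = 2 -> u \in e -> exists w, u != w /\ e = [set u; w].
Proof.
move=> /eqP /cards2P [a [b [ab eab]]]; rewrite eab !inE => /orP[] /eqP ->.
  by exists b.
by exists a; rewrite eq_sym ab setUC.
Qed.

Lemma star_card (V : finType) (E : {set {set V}}) (u : V) :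
  (forall e, e \in E -> #|e| = 2) ->
  #|[set w | [set u; w] \in E]| = #|[set e in E | u \in e]|.
Proof.
move=> hE2.
rewrite -(@card_in_imset _ _ (fun w => [set u; w])).
  apply: eq_card => e; rewrite [in RHS]inE; apply/imsetP/andP.
    by case => w; rewrite inE => hw ->; split => //; rewrite !inE eqxx.
  case => he hu; have [w [uw ew]] := set2_of (hE2 _ he) hu.
  by exists w; rewrite ?inE -?ew.
move=> w w'; rewrite !inE => hw hw' eq.
have : w \in [set u; w'] by rewrite -eq !inE eqxx orbT.
rewrite !inE => /orP[/eqP wu | /eqP //].
by move: (set2_neq hE2 hw); rewrite wu eqxx.
Qed.

Lemma delta_single (V : finType) (E : {set {set V}}) (u : V) :
  delta0 E [set u] = [set e in E | u \in e].
Proof. by apply/setP => e; rewrite !inE cardI1; case: (u \in e). Qed.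

Lemma delta_compl (V : finType) (E : {set {set V}}) (S : {set V}) :
  (forall e, e \in E -> #|e| = 2) -> delta0 E (~: S) = delta0 E S.
Proof.
move=> hE2; apply/setP => e; rewrite !inE; case he: (e \in E) => //=.
rewrite -setDE; have := cardsID S e; rewrite (hE2 e he).
by move: #|e :&: S| #|e :\: S| => [|[|[|a]]] [|[|[|b]]].
Qed.

Lemma delta_set0 (V : finType) (E : {set {set V}}) : delta0 E set0 = set0.
Proof. by apply/setP => e; rewrite !inE setI0 cards0 andbF. Qed.

Lemma delta_setT (V : finType) (E : {set {set V}}) :
  (forall e, e \in E -> #|e| = 2) -> delta0 E setT = set0.
Proof.
move=> hE2; apply/setP => e; rewrite !inE setIT; case he: (e \in E) => //=.
by rewrite (hE2 e he).
Qed.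

Lemma pairs_card (V : finType) (E : {set {set V}}) (S : {set V}) :
  (forall e, e \in E -> #|e| = 2) ->
  #|[set p : V * V | [&& [set p.1; p.2] \in E, p.1 \in S & p.2 \notin S]]| = #|delta0 E S|.
Proof.
move=> hE2.
rewrite -(@card_in_imset _ _ (fun p : V * V => [set p.1; p.2])).
  apply: eq_card => e; rewrite [in RHS]inE; apply/imsetP/andP.
    case => -[a b]; rewrite inE /= => /and3P [he ha hb] ->; split => //.
    by rewrite cardI2 ?(set2_neq hE2 he) // ha (negbTE hb).
  case => he /eqP h1.
  have [a [b [ab eab]]] : exists a b, a != b /\ e = [set a; b].
    by move: (hE2 _ he) => /eqP /cards2P.
  move: h1; rewrite eab cardI2 //.
  case ha: (a \in S); case hb: (b \in S) => // _.
    by exists (a, b); rewrite // inE /= -eab he ha hb.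
  by exists (b, a); rewrite /= 1?setUC // inE /= setUC -eab he ha hb.
move=> [a b] [a' b']; rewrite !inE /= => /and3P [h1 h2 h3] /and3P [h1' h2' h3'] eq.
have ha : a \in [set a'; b'] by rewrite -eq !inE eqxx.
have hb : b \in [set a'; b'] by rewrite -eq !inE eqxx orbT.
move: ha hb; rewrite !inE => /orP[/eqP -> | /eqP ab'] /orP[/eqP ba' | /eqP -> ] //.
- by move: h3; rewrite ba' h2'.
- by move: h2; rewrite ab' (negbTE h3').
- by move: h2; rewrite ab' (negbTE h3').
Qed.

Lemma handshake (V : finType) (E : {set {set V}}) (k0 : nat) :
  (forall e, e \in E -> #|e| = 2) ->
  (forall v : V, #|[set e in E | v \in e]| = k0) ->
  (2 * #|E| = #|V| * k0)%N.
Proof.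
move=> hE2 hdeg.
have : (\sum_(v : V) #|[set e in E | v \in e]| = \sum_(e in E) #|e|)%N.
  have -> : (\sum_(v : V) #|[set e in E | v \in e]| = \sum_(v : V) \sum_(e in E) (v \in e))%N.
    apply: eq_bigr => v _; rewrite -sum1_card big_mkcond [RHS]big_mkcond /=.
    by apply: eq_bigr => e _; rewrite inE; case: (e \in E); case: (v \in e).
  transitivity (\sum_(e in E) \sum_(v : V) (v \in e))%N; first exact: exchange_big.
  apply: eq_bigr => e _.
  by rewrite -sum1_card [RHS]big_mkcond /=; apply: eq_bigr => v _; case: (v \in e).
rewrite (eq_bigr (fun _ => k0)) // sum_nat_const.
rewrite (eq_bigr (fun _ => 2)) ?sum_nat_const; last by move=> e he; rewrite hE2.
by move=> ->; rewrite mulnC.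
Qed.

Lemma sum_ind (T : finType) (P : pred T) : (\sum_v (P v : nat))%N = #|P|.
Proof.
rewrite -sum1_card [RHS]big_mkcond /=; apply: eq_bigr => v _.
by have -> : P v = (v \in P) by []; case: (v \in P).
Qed.

Lemma sum_inds (T : finType) (P : pred T) : (\sum_v (P v : nat))%N = #|[set v | P v]|.
Proof. by rewrite sum_ind; apply: eq_card => v; rewrite inE. Qed.


Lemma sum_enum_val (V : finType) (F : V -> nat) :
  (\sum_(i < #|V|) F (enum_val i) = \sum_v F v)%N.
Proof. by rewrite -big_enum_val. Qed.

Lemma adj_sym (V : finType) (E : {set {set V}}) (R : nzRingType) :
  (@adjmx V E R)^T = @adjmx V E R.
Proof. by apply/matrixP => i j; rewrite !mxE setUC. Qed.

Lemma adj_row (V : finType) (E : {set {set V}}) (R : nzRingType) (k0 : nat) :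
  (forall e, e \in E -> #|e| = 2) ->
  (forall v : V, #|[set e in E | v \in e]| = k0) ->
  forall i, \sum_j (@adjmx V E R) i j = k0%:R.
Proof.
move=> hE2 hdeg i.
under eq_bigr do rewrite mxE.
rewrite -natr_sum (sum_enum_val (fun w => ([set enum_val i; w] \in E : nat))) -(hdeg (enum_val i)) -star_card //.
by rewrite sum_inds.
Qed.

Lemma adj_cut (V : finType) (E : {set {set V}}) (R : nzRingType) (S : {set V}) :
  (forall e, e \in E -> #|e| = 2) ->
  \sum_i \sum_j (@adjmx V E R) i j * ((enum_val i \in S)%:R) * (1 - (enum_val j \in S)%:R)
  = #|delta0 E S|%:R.
Proof.
move=> hE2.
transitivity ((\sum_(i < #|V|) \sum_(j < #|V|) ([&& [set enum_val i; enum_val j] \in E, enum_val i \in S & enum_val j \notin S] : nat))%:R : R).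
  rewrite natr_sum; apply: eq_bigr => i _; rewrite natr_sum; apply: eq_bigr => j _.
  rewrite mxE; case: ([set _; _] \in E); case: (enum_val i \in S); case: (enum_val j \in S);
  by rewrite /= ?(mulr0, mul0r, mulr1, mul1r, subrr, subr0).
congr (_ %:R).
transitivity (\sum_(u : V) \sum_(w : V) ([&& [set u; w] \in E, u \in S & w \notin S] : nat))%N.
  rewrite -sum_enum_val; apply: eq_bigr => i _.
  by rewrite -(sum_enum_val (fun w => ([&& [set enum_val i; w] \in E, enum_val i \in S & w \notin S] : nat))).
by rewrite pair_big /= -(pairs_card S hE2) sum_inds.
Qed.



Lemma f_real (R : realType) (r : R) : (real_complex R r : R[i]) \is Num.real.
Proof.
by rewrite realE -(rmorph0 (real_complex R)) !complex.lecR -realE num_real.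
Qed.

Lemma quadE (R : realType) n (u v : 'cV[R[i]]_n) (M : 'M[R[i]]_n) :
  ((u ^t*)%sesqui *m M *m v) 0 0 = \sum_i \sum_j (u i 0)^* * M i j * v j 0.
Proof.
rewrite mxE; under eq_bigr do rewrite mxE mulr_suml.
rewrite exchange_big; apply: eq_bigr => i _; apply: eq_bigr => j _.
by rewrite !mxE.
Qed.

Lemma dotE (R : realType) n (u v : 'cV[R[i]]_n) :
  ((u ^t*)%sesqui *m v) 0 0 = \sum_i (u i 0)^* * v i 0.
Proof. by rewrite mxE; apply: eq_bigr => i _; rewrite !mxE. Qed.

Lemma rayleigh (R : realType) n (A : 'M[R]_n) (s : seq R) (k : R) (x : 'I_n -> R) :
  A^T = A ->
  sorted (fun a b => b <= a) s ->
  char_poly A = \prod_(r <- s) ('X - r%:P) ->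
  (forall i, \sum_j A i j = k) ->
  s`_1 < k ->
  \sum_i x i = 0 ->
  \sum_i \sum_j A i j * x i * x j <= s`_1 * \sum_i x i ^+ 2.
Proof.
move=> Asym ssort Achar Arow s1k xsum.
case: n A x Asym Achar Arow xsum => [|n] A x Asym Achar Arow xsum.
  by rewrite !big_ord0 mulr0.
pose Ac : 'M[R[i]]_n.+1 := map_mx (real_complex R) A.
have Acreal : Ac \is a mxOver Num.real.
  by apply/mxOverP => i j; rewrite mxE f_real.
have Acsym : Ac \is symmetricmx.
  apply/is_hermitianmxP; rewrite expr0 scale1r.
  by apply/matrixP => i j; rewrite !mxE -{1}Asym mxE.
have Acherm : Ac \is hermsymmx by apply: realsym_hermsym.
have /orthomx_spectralP hP := symmetric_normalmx Acsym Acreal.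
set P := spectralmx Ac in hP; set d := spectral_diag Ac in hP.
have Pu : P \is unitarymx by apply: spectral_unitarymx.
have Punit : P \in unitmx by apply: spectral_unit.
have Pinv : invmx P = (P ^t*)%sesqui by apply: invmx_unitary.
have dreal : forall j, d 0 j \is Num.real.
  by move=> j; have /mxOverP := hermitian_spectral_diag_real Acherm; apply.
have charAc : char_poly Ac = \prod_j ('X - (d 0 j)%:P).
  rewrite [in LHS]hP char_poly_conj // char_poly_trig ?diag_mx_is_trig //.
  by apply: eq_bigr => j _; rewrite mxE eqxx mulr1n.
have charAc2 : char_poly Ac = \prod_(r <- s) ('X - (real_complex R r)%:P).
  rewrite /Ac -map_char_poly Achar rmorph_prod.
  by apply: eq_bigr => r _; exact: map_polyXsubC.
have hperm : perm_eq [seq d 0 j | j <- index_enum 'I_n.+1] [seq real_complex R r | r <- s].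
  by apply: prod_XsubC_eq; rewrite !big_map -charAc charAc2.
pose pz := fun z : R[i] => (s`_1 < complex.Re z)%R.
pose ds := [seq d 0 j | j <- index_enum 'I_n.+1].
have hcnt : (count pz ds <= 1)%N.
  by rewrite /ds (permP hperm) count_map; exact: count_gt_s1.
have huniq : forall i j, s`_1 < complex.Re (d 0 i) -> s`_1 < complex.Re (d 0 j) -> i = j.
  move=> i j hi hj; apply/eqP; apply/negPn/negP => hij.
  move: hcnt; rewrite count_map count_enumT => h.
  have := count2 (p := [pred j | s`_1 < complex.Re (d 0 j)]) hi hj hij.
  by move=> /(leq_trans) /(_ h).
pose one : 'cV[R[i]]_n.+1 := const_mx 1.
have Aone : Ac *m one = real_complex R k *: one.
  apply/matrixP => i j; rewrite !mxE -(Arow i) rmorph_sum mulr1.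
  by apply: eq_bigr => l _; rewrite !mxE mulr1.
have PAc : P *m Ac = diag_mx d *m P.
  by rewrite [in LHS]hP !mulmxA mulmxV // mul1mx.
pose z := P *m one.
have Dz : forall j, d 0 j * z j 0 = real_complex R k * z j 0.
  move=> j; have : diag_mx d *m z = real_complex R k *: z.
    by rewrite /z mulmxA -PAc -mulmxA Aone scalemxAr.
  by move=> /matrixP /(_ j 0); rewrite mul_diag_mx !mxE.
have znz : z != 0.
  apply/eqP => z0; have : invmx P *m z = one by rewrite /z mulKmx.
  rewrite z0 mulmx0 => /matrixP /(_ 0 0); rewrite !mxE => /eqP.
  by rewrite eq_sym oner_eq0.
have [i0 hi0] : exists i0, z i0 0 != 0.
  case: (pickP (fun i => z i 0 != 0)) => [i0 hi0 | hnone]; first by exists i0.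
  move: znz; suff -> : z = 0 by rewrite eqxx.
  by apply/matrixP => i j; rewrite ord1 [RHS]mxE; move: (hnone i) => /negbFE/eqP.
have di0 : d 0 i0 = real_complex R k by apply: (mulIf hi0); rewrite Dz.
have pi0 : s`_1 < complex.Re (d 0 i0) by rewrite di0.
have zj : forall j, j != i0 -> z j 0 = 0.
  move=> j hj; apply/eqP; apply: contraR hj => hz; apply/eqP.
  apply: huniq pi0; have -> : d 0 j = real_complex R k by apply: (mulIf hz); rewrite Dz.
  by [].
have dj : forall j, j != i0 -> d 0 j <= real_complex R s`_1.
  move=> j hj; have hnp : ~~ (s`_1 < complex.Re (d 0 j)).
    by apply/negP => h; move: hj; rewrite (huniq _ _ h pi0) eqxx.
  rewrite complex.lecE /=; apply/andP; split; last by rewrite leNgt.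
  have := RIm_real (dreal j); case => ->; by [].
pose xc : 'cV[R[i]]_n.+1 := \col_i real_complex R (x i).
pose y := P *m xc.
have PtP : (P ^t*)%sesqui *m P = 1%:M by rewrite -Pinv mulVmx.
have yt : (y ^t*)%sesqui = (xc ^t*)%sesqui *m (P ^t*)%sesqui.
  by rewrite /y trmx_mul map_mxM.
have xce : forall i, xc i 0 = real_complex R (x i) by move=> i; rewrite mxE.
have xcc : forall i, (xc i 0)^* = real_complex R (x i) by move=> i; rewrite xce conj_Creal ?f_real.
have orth : \sum_j (y j 0)^* * z j 0 = 0.
  rewrite -dotE yt /z -mulmxA (mulmxA (P ^t*)%sesqui) PtP mul1mx dotE.
  under eq_bigr do rewrite xcc mxE mulr1.
  by rewrite -rmorph_sum xsum rmorph0.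
have y0 : y i0 0 = 0.
  move: orth; rewrite (bigD1 i0) //= big1 ?addr0; last first.
    by move=> j hj; rewrite zj // mulr0.
  by move=> /eqP; rewrite mulf_eq0 (negbTE hi0) orbF conjC_eq0 => /eqP.
have Qc : real_complex R (\sum_i \sum_j A i j * x i * x j) = \sum_j (y j 0)^* * d 0 j * y j 0.
  have : ((xc ^t*)%sesqui *m Ac *m xc) 0 0 = ((y ^t*)%sesqui *m diag_mx d *m y) 0 0.
    by rewrite yt [in LHS]hP Pinv /y !mulmxA.
  rewrite quadE => h; transitivity (\sum_i \sum_j (xc i 0)^* * Ac i j * xc j 0).
    rewrite rmorph_sum; apply: eq_bigr => i _; rewrite rmorph_sum; apply: eq_bigr => j _.
    rewrite xcc xce [Ac i j]mxE !rmorphM; congr (_ * _); exact: mulrC.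
  rewrite h mxE; apply: eq_bigr => j _.
  by rewrite mul_mx_diag [X in X * _ = _]mxE [(y ^t*)%sesqui 0 j]mxE [y^T 0 j]mxE.
have Nc : real_complex R (\sum_i x i ^+ 2) = \sum_j (y j 0)^* * y j 0.
  rewrite -dotE yt /y -!mulmxA (mulmxA (P ^t*)%sesqui P) PtP mul1mx dotE rmorph_sum.
  by apply: eq_bigr => i _; rewrite xcc xce rmorphXn expr2.
have key : \sum_j (y j 0)^* * d 0 j * y j 0 <= real_complex R s`_1 * \sum_j (y j 0)^* * y j 0.
  rewrite mulr_sumr; apply: ler_sum => j _.
  case: (eqVneq j i0) => [-> | hj]; first by rewrite y0 !(mulr0, conjC0, mul0r).
  rewrite mulrAC [X in _ <= X]mulrC; apply: ler_wpM2l; last exact: dj.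
  by rewrite mulrC mul_conjC_ge0.
by move: key; rewrite -Qc -Nc -rmorphM complex.lecR.
Qed.



Lemma quad_expand (R : comRingType) n (a : 'I_n -> 'I_n -> R) (c : 'I_n -> R) p q :
  \sum_i \sum_j a i j * (p * c i - q) * (p * c j - q) =
  p ^+ 2 * (\sum_i \sum_j a i j * c i * c j) - p * q * (\sum_i \sum_j a i j * c i)
  - p * q * (\sum_i \sum_j a i j * c j) + q ^+ 2 * (\sum_i \sum_j a i j).
Proof.
rewrite !mulr_sumr -!sumrB -big_split /=; apply: eq_bigr => i _.
rewrite !mulr_sumr -!sumrB -big_split /=; apply: eq_bigr => j _.
ring.
Qed.

Lemma sq_expand (R : comRingType) n (c : 'I_n -> R) p q :
  (forall i, c i * c i = c i) ->
  \sum_i (p * c i - q) ^+ 2 = (p ^+ 2 - 2 * p * q) * (\sum_i c i) + q ^+ 2 * n%:R.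
Proof.
move=> cc; have hn : (n%:R : R) = \sum_(i < n) 1 by rewrite sumr_const card_ord.
rewrite hn !mulr_sumr -big_split /=.
apply: eq_bigr => i _.
have e : (p * c i - q) ^+ 2 = p ^+ 2 * (c i * c i) - 2 * p * q * c i + q ^+ 2 by ring.
by rewrite e cc mulr1; ring.
Qed.

Lemma expansion (R : realType) (V : finType) (E : {set {set V}}) (k0 : nat)
  (s : seq R) (S : {set V}) :
  (forall e, e \in E -> #|e| = 2) ->
  (forall v : V, #|[set e in E | v \in e]| = k0) ->
  sorted (fun a b => b <= a) s ->
  char_poly (@adjmx V E R) = \prod_(r <- s) ('X - r%:P) ->
  s`_1 < k0%:R ->
  (k0%:R - s`_1) * (#|S|%:R * (#|V|%:R - #|S|%:R)) <= #|V|%:R * #|delta0 E S|%:R :> R.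
Proof.
move=> hE2 hdeg ssort hchar hs1.
have hrow := adj_row R hE2 hdeg.
have hsym := adj_sym E R.
set A := @adjmx V E R in hrow hsym hchar *.
pose c := fun i : 'I_#|V| => ((enum_val i \in S)%:R : R).
have cc : forall i, c i * c i = c i.
  by move=> i; rewrite /c; case: (_ \in S); rewrite ?mulr1 ?mulr0.
have csum : \sum_i c i = #|S|%:R.
  rewrite /c -natr_sum (sum_enum_val (fun v => (v \in S : nat))) sum_inds.
  by congr _%:R; apply: eq_card => v; rewrite inE.
have hcut : \sum_i \sum_j A i j * c i * (1 - c j) = #|delta0 E S|%:R by apply: adj_cut.
have S2 : \sum_i \sum_j A i j * c i = k0%:R * #|S|%:R.
  rewrite -csum mulr_sumr; apply: eq_bigr => i _.
  by rewrite -mulr_suml hrow.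
have S3 : \sum_i \sum_j A i j * c j = k0%:R * #|S|%:R.
  rewrite exchange_big -csum mulr_sumr; apply: eq_bigr => j _.
  rewrite -mulr_suml -(hrow j); congr (_ * _); apply: eq_bigr => i _.
  by rewrite -[in LHS]hsym mxE.
have S1 : \sum_i \sum_j A i j * c i * c j = k0%:R * #|S|%:R - #|delta0 E S|%:R.
  rewrite -S2 -hcut -sumrB; apply: eq_bigr => i _; rewrite -sumrB; apply: eq_bigr => j _.
  ring.
have S4 : \sum_i \sum_j A i j = #|V|%:R * k0%:R.
  under eq_bigr do rewrite hrow.
  by rewrite sumr_const card_ord mulr_natl.
pose x := fun i => #|V|%:R * c i - #|S|%:R.
have xsum : \sum_i x i = 0.
  rewrite /x sumrB -mulr_sumr csum sumr_const card_ord -mulr_natl; ring.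
have := rayleigh hsym ssort hchar hrow hs1 xsum.
rewrite /x quad_expand sq_expand // S1 S2 S3 S4 csum => H.
case: (posnP #|V|) => [N0 | Npos].
  have S0 : #|S| = 0%N by apply/eqP; rewrite -leqn0 -N0 max_card.
  by rewrite S0 N0 !mul0r mulr0.
have hN : 0 < (#|V|%:R : R) by rewrite ltr0n.
move: H hN; set N := (#|V|%:R : R); set sS := (#|S|%:R : R); set d := (#|delta0 E S|%:R : R).
set k := (k0%:R : R); set l := s`_1 => H hN.
rewrite -subr_ge0 -(pmulr_rge0 _ hN).
have -> : N * (N * d - (k - l) * (sS * (N - sS))) =
  l * ((N ^+ 2 - 2 * N * sS) * sS + sS ^+ 2 * N) -
  (N ^+ 2 * (k * sS - d) - N * sS * (k * sS) - N * sS * (k * sS) + sS ^+ 2 * (N * k)) by ring.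
by rewrite subr_ge0.
Qed.


Lemma distS_ge (X : finType) (A B : {set X}) : (#|B| <= #|B :\: A| + #|A|)%N.
Proof.
have := cardsID A B => <-; rewrite [X in (X <= _)%N]addnC leq_add2l.
by apply: subset_leq_card; apply: subsetIr.
Qed.

Lemma distS_ge' (X : finType) (A B : {set X}) : (#|B| - #|A| <= distS A B)%N.
Proof.
rewrite leq_subLR /distS; apply: (leq_trans (distS_ge A B)).
by rewrite addnC leq_add2l leq_addl.
Qed.

Lemma dist_fam_ge (X : finType) (A : {set X}) (P : pred {set X}) (t : nat) :
  (t <= #|X|)%N -> (forall Z, P Z -> t <= distS A Z)%N -> (t <= dist_fam A P)%N.
Proof.
move=> hX hZ; rewrite /dist_fam; apply: (big_ind (fun x => t <= x)%N) => //.
  by move=> a b ha hb; rewrite leq_min ha hb.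
Qed.

Lemma cut_real (R : realType) (k n s d lam : R) :
  0 < k -> lam < 1 / 2 -> 4 * (1 - lam) / (1 - 2 * lam) < n ->
  2 <= s -> 2 <= n - s ->
  (k - lam * k) * (s * (n - s)) <= n * d -> k <= d.
Proof.
move=> hk hl hn hs hns H.
have h12 : 0 < 1 - 2 * lam by lra.
have hn' : 4 * (1 - lam) < n * (1 - 2 * lam) by rewrite -ltr_pdivrMr.
have hsn : 2 * n - 4 <= s * (n - s).
  rewrite -subr_ge0.
  have -> : s * (n - s) - (2 * n - 4) = (s - 2) * (n - s - 2) by ring.
  by apply: mulr_ge0; lra.
have hn0 : 0 < n by move: hs hns; clear; lra.
have : k * n <= n * d.
  apply: le_trans H.
  have e : k - lam * k = k * (1 - lam) by ring.
  have h1 : n <= (1 - lam) * (2 * n - 4).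
    rewrite -subr_ge0.
    have -> : (1 - lam) * (2 * n - 4) - n = n * (1 - 2 * lam) - 4 * (1 - lam) by ring.
    by rewrite subr_ge0 ltW.
  have h2 : (1 - lam) * (2 * n - 4) <= (1 - lam) * (s * (n - s)).
    by apply: ler_wpM2l => //; lra.
  rewrite e -mulrA; apply: ler_wpM2l; first exact: ltW.
  exact: le_trans h1 h2.
by rewrite mulrC ler_pM2l.
Qed.

Lemma cob_large (R : realType) (V : finType) (E : {set {set V}}) (k0 : nat)
  (s : seq R) (S : {set V}) :
  (forall e, e \in E -> #|e| = 2) ->
  (forall v : V, #|[set e in E | v \in e]| = k0) ->
  sorted (fun a b => b <= a) s ->
  char_poly (@adjmx V E R) = \prod_(r <- s) ('X - r%:P) ->
  (0 < k0)%N ->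
  s`_1 / k0%:R < 1 / 2 ->
  4 * (1 - s`_1 / k0%:R) / (1 - 2 * (s`_1 / k0%:R)) < #|V|%:R ->
  S != set0 -> S != setT -> (k0 <= #|delta0 E S|)%N.
Proof.
move=> hE2 hdeg ssort hchar hk hl hn hS0 hST.
have hk' : 0 < (k0%:R : R) by rewrite ltr0n.
have s1e : s`_1 = s`_1 / k0%:R * k0%:R by rewrite divfK // gt_eqF.
have hs1 : s`_1 < k0%:R.
  rewrite s1e; rewrite -[X in _ < X]mul1r ltr_pM2r //; lra.
have hC := cardsC S.
have sgt0 : (0 < #|S|)%N by rewrite card_gt0.
have cgt0 : (0 < #|~: S|)%N.
  rewrite card_gt0; apply: contra hST => /eqP h.
  by rewrite -[S]setCK h setC0.
case: (eqVneq #|S| 1%N) => [/eqP/cards1P [u ->] | s1].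
  by rewrite delta_single hdeg.
case: (eqVneq #|~: S| 1%N) => [/eqP/cards1P [u hu] | c1].
  by rewrite -delta_compl // hu delta_single hdeg.
have := expansion S hE2 hdeg ssort hchar hs1.
rewrite [X in k0%:R - X]s1e => H.
rewrite -(ler_nat R); apply: (cut_real hk' hl hn _ _ H).
  by rewrite (ler_nat R 2); case: #|S| sgt0 s1 => [|[|m]].
rewrite -hC natrD addrAC subrr add0r.
by rewrite (ler_nat R 2); case: #|~: S| cgt0 c1 => [|[|m]].
Qed.

Lemma card_setset (V : finType) (F : {set {set V}}) : (#|F| <= #|{set {set V}}|)%N.
Proof.
apply: (leq_trans (max_card _)).
apply: (leq_trans (ltnW (ltn_expl #|{set V}| (ltnSn 1)))).
rewrite -cardsT -card_powerset; exact: max_card.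
Qed.

Lemma core (R : realType) (V : finType) (E T : {set {set V}}) (k0 k1 : nat)
  (eps mu : R) (s : seq R) (F : {set {set V}}) (v : V) (t : nat) :
  is_2complex E T -> regular E T k0 k1 -> cosystolic E T k0 k1 eps mu ->
  F \subset E -> spectrum (@adjmx V E R) s ->
  (0 < k0)%N -> lambda2_tilde k0 s < 1 / 2 ->
  4 * (1 - lambda2_tilde k0 s) / (1 - 2 * lambda2_tilde k0 s) < #|V|%:R ->
  2 / mu < #|V|%:R ->
  (0 < t)%N -> (t <= #|local_view F v|)%N -> (t + #|local_view F v| <= k0)%N ->
  eps * k1%:R * t%:R <= #|delta1 T (local_view F v)|%:R.
Proof.
move=> [hE2 _] [hdeg _] [heps [hmu [_ h1]]] hFE [ssort hchar] hk hl ha hm ht htf htk.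
set Fv := local_view F v in htf htk *.
have hFvE : Fv \subset E.
  apply: subset_trans hFE; apply/subsetP => e; rewrite inE => /andP[].
  by [].
have hdist : forall Z, Z1 E T Z -> (t <= distS Fv Z)%N.
  move=> Z /andP[hZE /eqP hdZ].
  have big : (k0 <= #|Z|)%N -> (t <= distS Fv Z)%N.
    move=> hZ; have := distS_ge' Fv Z; lia.
  move: (h1 Z hZE); rewrite hdZ eqxx => -[[S hS] | hbig].
    case: (eqVneq S set0) => [S0 | S0].
      rewrite hS S0 delta_set0 /distS setD0 set0D cards0 addn0; exact: htf.
    case: (eqVneq S setT) => [ST | ST].
      rewrite hS ST delta_setT // /distS setD0 set0D cards0 addn0; exact: htf.
    apply: big; rewrite hS; exact: (cob_large hE2 hdeg ssort hchar hk hl ha S0 ST).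
  apply: big; rewrite -(ler_nat R); apply: le_trans hbig.
  have hh := handshake hE2 hdeg.
  have hE : (#|E|%:R : R) = #|V|%:R * k0%:R / 2.
    by rewrite -natrM -hh natrM mulrAC divff ?mul1r // pnatr_eq0.
  rewrite hE; move: hm; rewrite ltr_pdivrMr // => hm.
  have hk0 : 0 <= (k0%:R : R) by [].
  have -> : mu * (#|V|%:R * k0%:R / 2) = (#|V|%:R * mu) * k0%:R / 2 by ring.
  rewrite ler_pdivlMr //.
  have -> : (k0%:R : R) * 2 = 2 * k0%:R by rewrite mulrC.
  by apply: ler_wpM2r => //; apply: ltW.
have hX : (t <= #|{set V}|)%N := leq_trans htf (max_card _).
have hdf := dist_fam_ge hX hdist.
have hd0 : (0 < dist_fam Fv (Z1 E T))%N := leq_trans ht hdf.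
move: (h1 Fv hFvE); case: eqP => [hd | hd].
  have : (t <= distS Fv Fv)%N by apply: hdist; rewrite /Z1 hFvE hd eqxx.
  by rewrite /distS setDv cards0 leqn0 => /eqP t0; move: ht; rewrite t0.
rewrite ler_pdivlMr ?ltr0n // => H.
apply: le_trans H; apply: ler_wpM2l.
  by apply: mulr_ge0; [apply: ltW|].
by rewrite ler_nat.
Qed.

Unset Implicit Arguments.
Theorem lemma3p8 (R : realType) :
  exists N : R -> R -> nat,
  forall (V : finType) (E T : {set {set V}}) (k0 k1 : nat) (eps mu eta : R)
         (s : seq R) (F : {set {set V}}),
    is_2complex E T ->
    regular E T k0 k1 ->
    cosystolic E T k0 k1 eps mu ->
    1 / 2 < eta < 1 ->
    F \subset E ->
    spectrum (@adjmx V E R) s ->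
    lambda2_tilde k0 s < 1 / 2 ->
    (N mu (lambda2_tilde k0 s) <= #|V|)%N ->
    (forall v : V,
        (k0%:R / 2 : R) < #|local_view F v|%:R <= eta * k0%:R ->
        eps * k1%:R * (1 - eta) * k0%:R <= #|delta1 T (local_view F v)|%:R) /\
    (forall v : V,
        #|local_view F v|%:R <= k0%:R / 2 :> R ->
        eps * k1%:R * #|local_view F v|%:R <= #|delta1 T (local_view F v)|%:R).
Proof.
exists (fun mu lam => (Num.trunc (4 * (1 - lam) / (1 - 2 * lam)) + Num.trunc (2 / mu)).+1).
move=> V E T k0 k1 eps mu eta s F hc hr hcos /andP[he1 he2] hFE hsp hl hN.
set lam := lambda2_tilde k0 s in hl hN *.
have ha : 4 * (1 - lam) / (1 - 2 * lam) < #|V|%:R.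
  apply: (lt_le_trans (truncnS_gt _)); rewrite ler_nat.
  by apply: leq_trans hN; rewrite ltnS leq_addr.
have hm : 2 / mu < #|V|%:R.
  apply: (lt_le_trans (truncnS_gt _)); rewrite ler_nat.
  by apply: leq_trans hN; rewrite ltnS leq_addl.
have [heps _] := hcos.
split => v.
  move=> /andP[hf1 hf2].
  set f := #|local_view F v| in hf1 hf2 *.
  have hk : (0 < k0)%N.
    rewrite lt0n; apply/negP => /eqP k00; move: hf1 hf2; rewrite k00 mulr0 mul0r.
    move=> h1 h2; have := lt_le_trans h1 h2; by rewrite ltxx.
  have hkR : 0 < (k0%:R : R) by rewrite ltr0n.
  have hfk : (f < k0)%N.
    rewrite -(ltr_nat R); apply: (le_lt_trans hf2).
    by rewrite -[X in _ < X]mul1r ltr_pM2r.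
  have h2f : (k0 < 2 * f)%N.
    rewrite -(ltr_nat R) natrM; move: hf1; rewrite ltr_pdivrMr // mulrC.
    by [].
  have hA : (k0 - f <= f)%N by rewrite leq_subLR addnn -mul2n; apply: ltnW.
  have hB : (k0 - f + f <= k0)%N by rewrite subnK //; apply: ltnW.
  have hC : (0 < k0 - f)%N by rewrite subn_gt0.
  have H := core (v := v) (t := (k0 - f)%N) hc hr hcos hFE hsp hk hl ha hm hC hA hB.
  apply: le_trans H.
  rewrite -mulrA; apply: ler_wpM2l.
    by apply: mulr_ge0; [apply: ltW|].
  rewrite natrB; last exact: ltnW.
  have -> : (1 - eta) * k0%:R = k0%:R - eta * k0%:R by ring.
  by rewrite lerD2l lerN2.
move=> hf.
set f := #|local_view F v| in hf *.
case: (posnP f) => [f0 | fpos].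
  by rewrite f0 mulr0.
have h2f : (2 * f <= k0)%N.
  rewrite -(ler_nat R) natrM; move: hf; rewrite ler_pdivlMr // mulrC.
  by [].
have hk : (0 < k0)%N.
  by apply: (leq_trans fpos); apply: (leq_trans _ h2f); rewrite leq_pmull.
apply: (core (v := v) (t := f) hc hr hcos hFE hsp hk hl ha hm fpos (leqnn _)).
by rewrite addnn -mul2n.
Qed.
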